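(* Let $\ell\in\{2,3\}$ and let $G\subseteq\Delta_2(\mathbb{F}_\ell)$ be a subgroup with $\operatorname{pr}_i(G)=\operatorname{GL}_2(\mathbb{F}_\ell)$ for each $i\in\{1,2\}$. Then $G=\Delta_2(\mathbb{F}_\ell)$ if and only if there exists $(g_1,g_2)\in G$ with $(\dim_1g_1,\dim_1g_2)\in\{(0,1),(1,0),(1,2),(2,1)\}$ when $\ell=2$, respectively $(\dim_1g_1,\dim_1g_2)\in\{(1,2),(2,1)\}$ when $\ell=3$.
   Context: $\Delta_2(\mathbb{F}_\ell)=\{(g_1,g_2)\in\operatorname{GL}_2(\mathbb{F}_\ell)^2:\det g_1=\det g_2\}$; $\operatorname{pr}_i$ is the projection onto the $i$-th factor; for $g\in\operatorname{GL}_2(\mathbb{F}_\ell)$, $\dim_1g=\dim_{\mathbb{F}_\ell}\ker(g-I)$. *)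

(* Defs.v *)
From HB Require Import structures.
From mathcomp Require Import all_boot all_order all_algebra all_fingroup.
Set Implicit Arguments. Unset Strict Implicit. Unset Printing Implicit Defensive.
Import GRing.Theory.
Local Open Scope ring_scope.

Notation GL2 l := {'GL_2['F_l]}.

Definition Delta2 (l : nat) : {set (GL2 l * GL2 l)%type} :=
  [set g : (GL2 l * GL2 l)%type | \det (GLval g.1) == \det (GLval g.2)].

Definition dim1 (l : nat) (g : GL2 l) : nat :=
  \rank (kermx (GLval g - 1%:M)).

Definition pr1 (l : nat) (G : {set (GL2 l * GL2 l)%type}) : {set GL2 l} :=
  [set g.1 | g in G].
Definition pr2 (l : nat) (G : {set (GL2 l * GL2 l)%type}) : {set GL2 l} :=
  [set g.2 | g in G].

(* Main.v *)
Require Import Defs.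
From HB Require Import structures.
From mathcomp Require Import all_boot all_order all_algebra all_fingroup.
Set Implicit Arguments. Unset Strict Implicit. Unset Printing Implicit Defensive.


Section Abs.
Variable gT : finGroupType.
Variable G : {group (gT * gT)%type}.
Hypothesis hs1 : forall h : gT, exists h2, (h, h2) \in G.
Hypothesis hs2 : forall h : gT, exists h1, (h1, h) \in G.

Definition K1 := [set a | (a, 1%g) \in G].
Definition K2 := [set b | (1%g, b) \in G].

Lemma full1 (D : {set gT * gT}) (P : pred gT) : G \subset D ->
  (forall a a' b, (a, b) \in D -> (a', b) \in D -> P (a * a'^-1)%g) ->
  (forall s, P s -> s \in K1) -> G :=: D.
Proof.
move=> HGsub HD HK; apply/eqP; rewrite eqEsubset HGsub /=; apply/subsetP => -[a b] Hab.
have [a' Hg] := hs2 b.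
have := HK _ (HD _ _ _ Hab (subsetP HGsub _ Hg)).
rewrite inE => H1; have := groupM H1 Hg.
suff -> : ((a * a'^-1, 1) * (a', b))%g = ((a * a'^-1 * a')%g, (1 * b)%g) by rewrite mulgKV mul1g.
by [].
Qed.

Lemma full2 (D : {set gT * gT}) (P : pred gT) : G \subset D ->
  (forall a b b', (a, b) \in D -> (a, b') \in D -> P (b * b'^-1)%g) ->
  (forall s, P s -> s \in K2) -> G :=: D.
Proof.
move=> HGsub HD HK; apply/eqP; rewrite eqEsubset HGsub /=; apply/subsetP => -[a b] Hab.
have [b' Hg] := hs1 a.
have := HK _ (HD _ _ _ Hab (subsetP HGsub _ Hg)).
rewrite inE => H1; have := groupM H1 Hg.
suff -> : ((1, b * b'^-1) * (a, b'))%g = ((1 * a)%g, (b * b'^-1 * b')%g) by rewrite mulgKV mul1g.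
by [].
Qed.

Lemma K1M a b : a \in K1 -> b \in K1 -> (a * b)%g \in K1.
Proof.
rewrite !inE => Ha Hb; have := groupM Ha Hb.
suff -> : ((a, 1) * (b, 1))%g = ((a * b)%g, (1 * 1)%g) by rewrite mulg1.
by [].
Qed.

Lemma K2M a b : a \in K2 -> b \in K2 -> (a * b)%g \in K2.
Proof.
rewrite !inE => Ha Hb; have := groupM Ha Hb.
suff -> : ((1, a) * (1, b))%g = ((1 * 1)%g, (a * b)%g) by rewrite mulg1.
by [].
Qed.

Lemma K1J h a : a \in K1 -> (h * a * h^-1)%g \in K1.
Proof.
rewrite !inE => Ha; have [h2 Hg] := hs1 h.
have := groupM (groupM Hg Ha) (groupVr Hg).
suff -> : ((h, h2) * (a, 1) * (h, h2)^-1)%g = ((h * a * h^-1)%g, (h2 * 1 * h2^-1)%g)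
  by rewrite mulg1 mulgV.
by [].
Qed.

Lemma K2J h a : a \in K2 -> (h * a * h^-1)%g \in K2.
Proof.
rewrite !inE => Ha; have [h2 Hg] := hs2 h.
have := groupM (groupM Hg Ha) (groupVr Hg).
suff -> : ((h2, h) * (1, a) * (h2, h)^-1)%g = ((h2 * 1 * h2^-1)%g, (h * a * h^-1)%g)
  by rewrite mulg1 mulgV.
by [].
Qed.
End Abs.

Lemma surj1 (gT : finGroupType) (G : {group (gT * gT)%type}) :
  [set g.1 | g in G] = [set: gT] -> forall h : gT, exists h2, (h, h2) \in G.
Proof.
move=> E h; have : h \in [set g.1 | g in G] by rewrite E inE.
by case/imsetP => -[h1 h2] Hg /= ->; exists h2.
Qed.

Lemma surj2 (gT : finGroupType) (G : {group (gT * gT)%type}) :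
  [set g.2 | g in G] = [set: gT] -> forall h : gT, exists h1, (h1, h) \in G.
Proof.
move=> E h; have : h \in [set g.2 | g in G] by rewrite E inE.
by case/imsetP => -[h1 h2] Hg /= ->; exists h1.
Qed.

Import GRing.Theory.
Local Open Scope ring_scope.


Lemma det2 (R : comNzRingType) (M : 'M[R]_2) :
  \det M = M 0 0 * M 1 1 - M 0 1 * M 1 0.
Proof.
rewrite (expand_det_row M 0) !big_ord_recl big_ord0 /cofactor !det_mx11 !mxE /=.
rewrite addr0 expr0 expr1 !mul1r mulN1r mulrN.
by congr (M _ _ * M _ _ - M _ _ * M _ _); apply: val_inj.
Qed.

Definition quad := (nat * nat * nat * nat)%type.
Definition qe (q : quad) (i j : 'I_2) : nat :=
  let: (a, b, c, d) := q in
  if (i : nat) == 0%N then (if (j : nat) == 0%N then a else b)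
  else (if (j : nat) == 0%N then c else d).

Section Comp.
Variable l : nat.
Definition qmul (x y : quad) : quad :=
  let: (a, b, c, d) := x in let: (a', b', c', d') := y in
  ((a * a' + b * c') %% l, (a * b' + b * d') %% l,
   (c * a' + d * c') %% l, (c * b' + d * d') %% l)%N.
Definition qdet (q : quad) : nat :=
  let: (a, b, c, d) := q in ((a * d + (l - 1) * (b * c)) %% l)%N.
Definition qsub1 (q : quad) : quad :=
  let: (a, b, c, d) := q in (((a + (l - 1)) %% l), b, c, ((d + (l - 1)) %% l))%N.
Definition qone : quad := (1, 0, 0, 1)%N.
Definition rng := iota 0 l.
Definition allq : seq quad :=
  [seq (t, w) | t <- [seq (p, z) | p <- [seq (x, y) | x <- rng, y <- rng], z <- rng], w <- rng].
Definition invpairs := [seq p <- [seq (h, h') | h <- allq, h' <- allq] | qmul p.1 p.2 == qone].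
Definition addq (acc : seq quad) x := if x \in acc then acc else x :: acc.
Definition step IP (S : seq quad) : seq quad :=
  foldl addq S ([seq qmul x y | x <- S, y <- S] ++ [seq qmul (qmul p.1 x) p.2 | p <- IP, x <- S]).
Definition clos IP t n := iter n (step IP) [:: t].
Definition tcond t := [&& qdet t == 1%N, qdet (qsub1 t) == 0%N & t != qone].
Definition check n := let IP := invpairs in
  all (fun t => ~~ tcond t || (let S := clos IP t n in
     all (fun s => (qdet s != 1%N) || (s \in S)) allq)) allq.
Definition fact2 := all (fun q => (qdet q == 0%N) ||
   (if qdet (qsub1 q) == 0%N then qmul q (qmul q q) == q else qmul q (qmul q q) == qone)) allq.
End Comp.

Lemma check3 : check 3 3. Proof. by vm_compute. Qed.
Lemma check2 : check 2 2. Proof. by vm_compute. Qed.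
Lemma fact2_2 : fact2 2. Proof. by vm_compute. Qed.

Section Q.
Variable l : nat.
Hypothesis pl : prime l.

Definition qmx (q : quad) : 'M['F_l]_2 := \matrix_(i, j) (qe q i j)%:R.

Lemma qmulE x y : qmx (qmul l x y) = qmx x *m qmx y.
Proof.
case: x => [[[a b] c] d]; case: y => [[[a' b'] c'] d'].
apply/matrixP => i j; rewrite !mxE !big_ord_recl big_ord0 !mxE addr0.
case: i => [[|[|//]] Hi]; case: j => [[|[|//]] Hj];
  by rewrite /= Fp_nat_mod // natrD !natrM.
Qed.

Lemma Fp_lm1 : ((l - 1)%:R : 'F_l) = -1.
Proof. by rewrite natrB ?prime_gt0 // pchar_Fp_0 // sub0r. Qed.

Lemma qdetE q : \det (qmx q) = (qdet l q)%:R.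
Proof.
case: q => [[[a b] c] d]; rewrite det2 !mxE /= Fp_nat_mod // natrD !natrM Fp_lm1.
by rewrite mulN1r.
Qed.

Lemma qsub1E q : qmx (qsub1 l q) = qmx q - 1%:M.
Proof.
case: q => [[[a b] c] d]; apply/matrixP => i j; rewrite !mxE.
case: i => [[|[|//]] Hi]; case: j => [[|[|//]] Hj];
  by rewrite /= ?Fp_nat_mod // ?natrD ?Fp_lm1 ?subr0.
Qed.

Lemma qoneE : qmx qone = 1%:M.
Proof.
apply/matrixP => i j; rewrite !mxE.
by case: i => [[|[|//]] Hi]; case: j => [[|[|//]] Hj].
Qed.

Definition quadof (M : 'M['F_l]_2) : quad :=
  (val (M 0 0), val (M 0 1), val (M 1 0), val (M 1 1)).

Lemma Fp_val_lt (x : 'F_l) : (val x < l)%N.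
Proof. by case: x => x /=; rewrite Fp_cast. Qed.

Lemma Fp_natr_val (x : 'F_l) : (val x)%:R = x.
Proof. by apply: val_inj; rewrite /= val_Fp_nat // modn_small // Fp_val_lt. Qed.

Lemma quadofK M : qmx (quadof M) = M.
Proof.
apply/matrixP => i j; rewrite !mxE.
case: i => [[|[|//]] Hi]; case: j => [[|[|//]] Hj] /=; rewrite Fp_natr_val;
  by congr (M _ _); apply: val_inj.
Qed.

Lemma quadof_in M : quadof M \in allq l.
Proof.
rewrite /quadof /allq; have H (x : 'F_l) : (val x \in rng l) by rewrite mem_iota add0n Fp_val_lt.
by do 3 apply: (allpairs_f (fun t w => (t, w))) => //.
Qed.

Lemma natr_Fp_inj m n : (m < l)%N -> (n < l)%N -> (m%:R = n%:R :> 'F_l) -> m = n.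
Proof. by move=> Hm Hn /(congr1 val); rewrite /= !val_Fp_nat // !modn_small. Qed.

Lemma qdet_lt q : (qdet l q < l)%N.
Proof. by case: q => [[[a b] c] d]; rewrite ltn_pmod ?prime_gt0. Qed.

Lemma qdet_eq q n : (n < l)%N -> (\det (qmx q) = n%:R) <-> qdet l q = n.
Proof.
move=> Hn; rewrite qdetE; split; last by move->.
exact: natr_Fp_inj (qdet_lt q) Hn.
Qed.

End Q.



Lemma addq_mem acc x y : y \in addq acc x -> y \in acc \/ y = x.
Proof.
rewrite /addq; case: ifP => _ //; first by left.
by rewrite inE => /orP[/eqP|]; [right|left].
Qed.

Lemma foldl_addq_mem C S y : y \in foldl addq S C -> y \in S \/ y \in C.
Proof.
elim: C S => [|x C IH] S /=; first by left.
move=> /IH[/addq_mem[]|].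
- by left.
- by move=> ->; right; rewrite inE eqxx.
- by move=> H; right; rewrite inE H orbT.
Qed.

Lemma invmx_right n (R : comUnitRingType) (A B : 'M[R]_n) :
  A *m B = 1%:M -> invmx A = B.
Proof.
move=> AB; have [uA _] := mulmx1_unit AB.
by rewrite -[invmx A]mulmx1 -AB mulmxA mulVmx // mul1mx.
Qed.

Section Lift.
Variable l : nat.
Hypothesis pl : prime l.
Variable K : {set GL2 l}.
Hypothesis HKM : forall a b, a \in K -> b \in K -> (a * b)%g \in K.
Hypothesis HKJ : forall h a, a \in K -> (h * a * h^-1)%g \in K.

Definition liftable x := exists2 k, k \in K & GLval k = qmx l x.

Lemma invpairsP p : p \in invpairs l -> qmx l p.1 *m qmx l p.2 = 1%:M.
Proof.
rewrite mem_filter => /andP[/eqP E _].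
by rewrite -qmulE // E qoneE.
Qed.

Lemma step_lift S : {in S, forall x, liftable x} ->
  {in step l (invpairs l) S, forall x, liftable x}.
Proof.
move=> HS y /foldl_addq_mem[/HS //|]; rewrite mem_cat => /orP[].
  case/allpairsP => [[x z] [/= /HS [k1 Hk1 E1] /HS [k2 Hk2 E2] ->]].
  by exists (k1 * k2)%g; [exact: HKM | rewrite qmulE // GL_MxE E1 E2].
case/allpairsP => [[p x] [/= /invpairsP Hp /HS [k Hk E] ->]].
have [Hu _] := mulmx1_unit Hp.
pose H : GL2 l := Sub (qmx l p.1) Hu.
exists (H * k * H^-1)%g; first exact: HKJ.
by rewrite !GL_MxE GL_VxE /= E (invmx_right Hp) !qmulE.
Qed.

Lemma clos_lift t n : liftable t -> {in clos l (invpairs l) t n, forall x, liftable x}.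
Proof.
move=> Ht; elim: n => [|n IH] /=; first by move=> x; rewrite inE => /eqP ->.
exact: step_lift.
Qed.

Lemma SL_sub N : check l N -> forall t, t \in K -> \det (GLval t) = 1 ->
  \det (GLval t - 1%:M) = 0 -> (t != 1)%g ->
  forall s : GL2 l, \det (GLval s) = 1 -> s \in K.
Proof.
move=> /allP hc t tK dt dt1 tn1 s ds.
have l1 : (1 < l)%N by rewrite prime_gt1.
have l0 : (0 < l)%N by rewrite prime_gt0.
set q := quadof (GLval t).
have Eq : qmx l q = GLval t by rewrite (quadofK pl).
have /hc : q \in allq l by apply: quadof_in.
have -> : tcond l q.
  apply/and3P; split.
  - by apply/eqP/(qdet_eq pl) => //; rewrite Eq.
  - by apply/eqP/(qdet_eq pl) => //; rewrite (qsub1E pl) Eq.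
  - apply: contra tn1 => /eqP Eq1; apply/eqP/val_inj.
    by rewrite /= -Eq Eq1 qoneE.
move=> /= /allP /(_ (quadof (GLval s)) (quadof_in pl _)).
have -> : qdet l (quadof (GLval s)) = 1%N.
  by apply/(qdet_eq pl) => //; rewrite (quadofK pl).
move=> /= /(clos_lift (t := q)) [].
  by exists t.
by move=> k kK; rewrite (quadofK pl) => /val_inj <-.
Qed.

End Lift.


Lemma det_quot l (a a' : GL2 l) : \det (GLval a) = \det (GLval a') ->
  \det (GLval (a * a'^-1)%g) = 1.
Proof.
move=> E; rewrite GL_MxE GL_VxE det_mulmx det_inv E mulrV //.
by rewrite -unitmxE; exact: (GL_unit a').
Qed.

Lemma DeltaP l (g : GL2 l * GL2 l) : (g \in Delta2 l) = (\det (GLval g.1) == \det (GLval g.2)).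
Proof. by rewrite inE. Qed.

Definition transv l (t : GL2 l) := [/\ \det (GLval t) = 1,
  \det (GLval t - 1%:M) = 0 & (t != 1)%g].

Lemma trans1 l (pl : prime l) N (hc : check l N) (G : {group (GL2 l * GL2 l)%type})
  (HGsub : G \subset Delta2 l)
  (Hpr1 : pr1 G = [set: GL2 l]) (Hpr2 : pr2 G = [set: GL2 l]) t :
  (t, 1%g) \in G -> transv t -> G :=: Delta2 l.
Proof.
move=> tG [d1 d2 d3].
have hs1 := surj1 Hpr1; have hs2 := surj2 Hpr2.
apply: (full1 hs2 (P := fun s : GL2 l => \det (GLval s) == 1)) => //.
  move=> a a' b; rewrite !DeltaP /= => /eqP E /eqP E'.
  by apply/eqP/det_quot; rewrite E E'.
move=> s /eqP ds.
apply: (SL_sub pl (K1M (G := G)) (K1J hs1) hc (t := t)) => //; by rewrite inE.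
Qed.

Lemma trans2 l (pl : prime l) N (hc : check l N) (G : {group (GL2 l * GL2 l)%type})
  (HGsub : G \subset Delta2 l)
  (Hpr1 : pr1 G = [set: GL2 l]) (Hpr2 : pr2 G = [set: GL2 l]) t :
  (1%g, t) \in G -> transv t -> G :=: Delta2 l.
Proof.
move=> tG [d1 d2 d3].
have hs1 := surj1 Hpr1; have hs2 := surj2 Hpr2.
apply: (full2 hs1 (P := fun s : GL2 l => \det (GLval s) == 1)) => //.
  move=> a b b'; rewrite !DeltaP /= => /eqP E /eqP E'.
  by apply/eqP/det_quot; rewrite -E E'.
move=> s /eqP ds.
apply: (SL_sub pl (K2M (G := G)) (K2J hs2) hc (t := t)) => //; by rewrite inE.
Qed.


Lemma dim1E l (g : GL2 l) : dim1 g =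
  if \det (GLval g - 1%:M) != 0 then 0%N else if GLval g == 1%:M then 2%N else 1%N.
Proof.
rewrite /dim1 mxrank_ker.
have [->|ne] := eqVneq (GLval g) 1%:M.
  by rewrite subrr mxrank0 det0 eqxx.
have [d0|dn0] := eqVneq (\det (GLval g - 1%:M)) 0; last first.
  by rewrite mxrank_unit // unitmxE unitfE.
have r0 : \rank (GLval g - 1%:M) != 0%N by rewrite mxrank_eq0 subr_eq0.
have r2 : \rank (GLval g - 1%:M) != 2%N.
  apply/eqP => r2; have : GLval g - 1%:M \in unitmx by rewrite -row_free_unit /row_free r2.
  by rewrite unitmxE unitfE d0 eqxx.
have := rank_leq_row (GLval g - 1%:M).
by case: (\rank _) r0 r2 => [|[|[|]]].
Qed.

Lemma dim1_2 l (g : GL2 l) : dim1 g = 2%N -> g = 1%g.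
Proof.
rewrite dim1E; case: ifP => // _; case: ifP => // /eqP E _.
by apply: val_inj; change (GLval g = GLval 1%g); rewrite E.
Qed.

Lemma dim1_1 l (g : GL2 l) : dim1 g = 1%N -> \det (GLval g - 1%:M) = 0 /\ (g != 1)%g.
Proof.
rewrite dim1E; case: ifP => // /negbFE/eqP D; case: ifP => // /negbT N _.
split => //; apply: contra N => /eqP ->; by rewrite GL_1E.
Qed.

Lemma dim1_0 l (g : GL2 l) : dim1 g = 0%N -> \det (GLval g - 1%:M) != 0.
Proof. by rewrite dim1E; case: ifP => // _; case: ifP. Qed.

Lemma natr_Fp_eq0 l (pl : prime l) n : (n < l)%N -> (n%:R == 0 :> 'F_l) = (n == 0%N).
Proof.
move=> Hn; apply/eqP/eqP => [E|->//]; apply: (natr_Fp_inj pl Hn) => //.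
by rewrite prime_gt0.
Qed.

Lemma cube l (pl : prime l) (hf : fact2 l) (g : GL2 l) :
  (g * (g * g))%g = if \det (GLval g - 1%:M) == 0 then g else 1%g.
Proof.
set q := quadof (GLval g).
have Eq : qmx l q = GLval g by rewrite (quadofK pl).
have /allP/(_ q (quadof_in pl _)) := hf.
have -> : (qdet l q == 0%N) = false.
  rewrite -(natr_Fp_eq0 pl) ?qdet_lt // -qdetE // Eq; apply/negbTE; rewrite -unitfE -unitmxE.
  exact: (GL_unit g).
have -> : (qdet l (qsub1 l q) == 0%N) = (\det (GLval g - 1%:M) == 0).
  by rewrite -(natr_Fp_eq0 pl) ?qdet_lt // -qdetE // qsub1E // Eq.
case: ifP => _ /eqP E; apply: val_inj.
  change (GLval (g * (g * g))%g = GLval g).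
  by rewrite !GL_MxE -Eq -!qmulE // E.
change (GLval (g * (g * g))%g = GLval 1%g).
by rewrite !GL_MxE -Eq -!qmulE // E GL_1E qoneE.
Qed.

Lemma F2_one l (pl : prime l) (E2 : l = 2%N) (x : 'F_l) : x != 0 -> x = 1.
Proof.
move=> nx; rewrite -(Fp_natr_val pl x).
have nz : val x != 0%N.
  by apply: contra nx => /eqP h; apply/eqP/val_inj; rewrite h.
suff -> : val x = 1%N by rewrite mulr1n.
move: (Fp_val_lt pl x) nz; move: (val x) => v; rewrite E2.
by case: v => [|[|]].
Qed.

Lemma u_transv l (pl : prime l) : exists u : GL2 l, transv u.
Proof.
have l1 := prime_gt1 pl.
have du : \det (qmx l (1, 1, 0, 1)%N) = 1.
  by rewrite qdetE // /qdet !muln0 muln1 addn0 modn_small.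
have Hu : qmx l (1, 1, 0, 1)%N \in unitmx by rewrite unitmxE du unitr1.
pose u : GL2 l := Sub (qmx l (1, 1, 0, 1)%N) Hu.
exists u; split; rewrite ?SubK //.
  rewrite -qsub1E // qdetE // /qdet /=.
  rewrite subnKC; last by rewrite prime_gt0.
  by rewrite modnn !muln0 addn0 mod0n.
apply/eqP => /(congr1 (fun x : GL2 l => GLval x 0 1)).
rewrite SubK GL_1E !mxE /=; exact/eqP/oner_neq0.
Qed.

Local Close Scope ring_scope.


Theorem lemma6p1 (l : nat) (Hl : l = 2%N \/ l = 3%N)
  (G : {group (GL2 l * GL2 l)%type})
  (HGsub : G \subset Delta2 l)
  (Hpr1 : pr1 G = [set: GL2 l]) (Hpr2 : pr2 G = [set: GL2 l]) :
  G :=: Delta2 l <->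
  exists2 g, g \in G &
    (dim1 g.1, dim1 g.2) \in
      (if l == 2%N then [:: (0, 1); (1, 0); (1, 2); (2, 1)]
       else [:: (1, 2); (2, 1)])%N.
Proof.
have pl : prime l by case: Hl => ->.
have [N hc] : exists N, check l N.
  by case: Hl => ->; [exists 2%N; exact: check2 | exists 3%N; exact: check3].
have [u [du1 du2 du3]] := u_transv pl.
split.
  move=> HG; exists (u, 1%g).
    rewrite HG DeltaP; change ((\det (GLval u) == \det (GLval (1%g : GL2 l)))%R).
    by rewrite du1 GL_1E det1.
  have -> : dim1 u = 1%N.
    rewrite dim1E du2 eqxx /=; case: ifP => // /eqP E; case/eqP: du3.
    by apply: val_inj; change (GLval u = GLval 1%g); rewrite E.
  have -> : dim1 (1%g : GL2 l) = 2%N by rewrite dim1E GL_1E subrr det0 !eqxx.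
  by case: ifP.
case=> -[g1 g2] Hg Hd.
have dg : (\det (GLval g1) = \det (GLval g2))%R.
  by move: (subsetP HGsub _ Hg); rewrite DeltaP => /eqP.
have T1 : dim1 g1 = 1%N -> dim1 g2 = 2%N -> G :=: Delta2 l.
  move=> /dim1_1 [d1 n1] /dim1_2 E2; subst g2.
  apply: (trans1 pl hc HGsub Hpr1 Hpr2 Hg); split => //.
  by rewrite dg GL_1E det1.
have T2 : dim1 g1 = 2%N -> dim1 g2 = 1%N -> G :=: Delta2 l.
  move=> /dim1_2 E1 /dim1_1 [d1 n1]; subst g1.
  apply: (trans2 pl hc HGsub Hpr1 Hpr2 Hg); split => //.
  by rewrite -dg GL_1E det1.
move: Hd; case: ifP => [/eqP E2|_]; last first.
  by rewrite !inE !xpair_eqE => /orP[/andP[/eqP a /eqP b]|/andP[/eqP a /eqP b]]; auto.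
have hf : fact2 l by rewrite E2; exact: fact2_2.
have g3 : ((g1 * (g1 * g1))%g, (g2 * (g2 * g2))%g) \in G.
  by have := groupM Hg (groupM Hg Hg).
have detu (x : GL2 l) : (\det (GLval x) = 1)%R.
  apply: (F2_one pl E2); rewrite -unitfE -unitmxE; exact: (GL_unit x).
rewrite !inE !xpair_eqE.
case/or4P => /andP[/eqP a /eqP b]; auto.
- have [d2 n2] := dim1_1 b; have d1 := dim1_0 a.
  move: g3; rewrite !(cube pl hf) d2 eqxx (negbTE d1) => g3.
  by apply: (trans2 pl hc HGsub Hpr1 Hpr2 g3); split.
- have [d1 n1] := dim1_1 a; have d2 := dim1_0 b.
  move: g3; rewrite !(cube pl hf) d1 eqxx (negbTE d2) => g3.
  by apply: (trans1 pl hc HGsub Hpr1 Hpr2 g3); split.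
Qed.
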